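(* Let $h,g_1,g_2>0$ be reals and for $\Delta>0$ define (logarithms base $2$, $[x]^+=\max\{x,0\}$) $$I_1(\Delta)=\log\Big(1+\frac{h^2}{1+\Delta}+g_2^2\Big),\quad I_2(\Delta)=\log(1+g_1^2+g_2^2)-\log\frac{1+\Delta}{\Delta},\quad R_{\mathrm{QMF}}(\Delta)=[\min\{I_1(\Delta),I_2(\Delta)\}]^+.$$ Then $\Delta^*=\frac{1+h^2+g_2^2}{g_1^2}$ maximizes $R_{\mathrm{QMF}}(\Delta)$ over $\Delta>0$, and it is the solution of $I_1(\Delta)=I_2(\Delta)$.
   Context: $R_{\mathrm{QMF}}(\Delta)$ is the quantize-map-and-forward rate of the full-duplex Gaussian single-relay channel ($Y_r=\mathsf hX+Z_r$, $Y=\mathsf g_1X_r+\mathsf g_2X+Z$, unit powers, unit noise, $h=|\mathsf h|$, $g_i=|\mathsf g_i|$) when the relay uses a Gaussian vector quantizer $\hat Y_r=Y_r+\hat Z_r$, $\hat Z_r\sim\mathcal{CN}(0,\Delta)$; this is the optimal quantizer when the relay knows all channel magnitudes. *)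

(* Defs.v *)
From Stdlib Require Import Reals.
Open Scope R_scope.

Definition log2 (x : R) : R := ln x / ln 2.

Definition pos_part (x : R) : R := Rmax x 0.

Definition I1 (h g2 D : R) : R := log2 (1 + h ^ 2 / (1 + D) + g2 ^ 2).

Definition I2 (g1 g2 D : R) : R :=
  log2 (1 + g1 ^ 2 + g2 ^ 2) - log2 ((1 + D) / D).

Definition R_QMF (h g1 g2 D : R) : R := pos_part (Rmin (I1 h g2 D) (I2 g1 g2 D)).

Definition Delta_star (h g1 g2 : R) : R := (1 + h ^ 2 + g2 ^ 2) / g1 ^ 2.

(* Main.v *)
Require Import Defs.
From Stdlib Require Import Reals Lra.
Open Scope R_scope.

Lemma ln2_pos : 0 < ln 2.
Proof. rewrite <- ln_1. apply ln_increasing; lra. Qed.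

Lemma log2_le x y : 0 < x -> x <= y -> log2 x <= log2 y.
Proof.
  intros. unfold log2. unfold Rdiv. apply Rmult_le_compat_r.
  left; apply Rinv_0_lt_compat, ln2_pos. destruct H0; [left; apply ln_increasing; lra | subst; lra].
Qed.

Lemma log2_inj x y : 0 < x -> 0 < y -> log2 x = log2 y -> x = y.
Proof.
  intros. unfold log2 in H1. apply ln_inv; auto.
  pose proof ln2_pos. apply (Rmult_eq_reg_r (/ ln 2)); [exact H1|].
  apply Rgt_not_eq, Rinv_0_lt_compat; lra.
Qed.

Lemma I2_eq g1 g2 D : 0 < D ->
  I2 g1 g2 D = log2 ((1 + g1^2 + g2^2) * D / (1 + D)).
Proof.
  intros. unfold I2, log2.
  assert (0 < 1 + g1^2 + g2^2) by nra.
  replace ((1 + g1^2 + g2^2) * D / (1 + D)) with ((1 + g1^2 + g2^2) / ((1+D)/D))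
    by (field; lra).
  assert (0 < (1+D)/D) by (apply Rdiv_lt_0_compat; lra).
  rewrite (Rdiv_def (_ + _ + _)), ln_mult, ln_Rinv; auto.
  field. pose proof ln2_pos; lra.
  apply Rinv_0_lt_compat; auto.
Qed.

Theorem mainTheorem8 (h g1 g2 : R) (hh : 0 < h) (hg1 : 0 < g1) (hg2 : 0 < g2) :
  0 < Delta_star h g1 g2 /\
  (forall D : R, 0 < D -> R_QMF h g1 g2 D <= R_QMF h g1 g2 (Delta_star h g1 g2)) /\
  I1 h g2 (Delta_star h g1 g2) = I2 g1 g2 (Delta_star h g1 g2) /\
  (forall D : R, 0 < D -> I1 h g2 D = I2 g1 g2 D -> D = Delta_star h g1 g2).
Proof.
  set (S := Delta_star h g1 g2).
  assert (Hg1 : 0 < g1^2) by nra.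
  assert (Hh : 0 < h^2) by nra.
  assert (Hg2 : 0 < g2^2) by nra.
  assert (HS : 0 < S) by (unfold S, Delta_star; apply Rdiv_lt_0_compat; lra).
  assert (HSe : S * g1^2 = 1 + h^2 + g2^2)
    by (unfold S, Delta_star; field; lra).
  assert (Heq : I1 h g2 S = I2 g1 g2 S).
  { rewrite I2_eq by lra. unfold I1. f_equal.
    apply (Rmult_eq_reg_r (1+S)); [|lra].
    field_simplify; try lra. }
  repeat split; auto.
  - intros D HD. unfold R_QMF, pos_part.
    assert (Rmin (I1 h g2 D) (I2 g1 g2 D) <= Rmin (I1 h g2 S) (I2 g1 g2 S)).
    { rewrite Heq, (Rmin_left (I2 _ _ _)) by lra.
      destruct (Rle_dec S D).
      - eapply Rle_trans; [apply Rmin_l|]. rewrite <- Heq. unfold I1.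
        apply log2_le.
        + assert (0 <= h^2/(1+D)) by (left; apply Rdiv_lt_0_compat; lra). lra.
        + apply Rplus_le_compat_r, Rplus_le_compat_l.
          unfold Rdiv. apply Rmult_le_compat_l; [lra|].
          apply Rinv_le_contravar; lra.
      - eapply Rle_trans; [apply Rmin_r|]. rewrite !I2_eq by lra.
        assert (0 < 1 + g1^2 + g2^2) by lra.
        apply log2_le.
        + apply Rdiv_lt_0_compat; [nra|lra].
        + apply (Rmult_le_reg_r ((1+D)*(1+S))); [nra|].
          field_simplify; try lra. nra. }
    apply Rle_max_compat_r; auto.
  - intros D HD H. rewrite I2_eq in H by lra. unfold I1 in H.
    apply log2_inj in H.
    + apply (Rmult_eq_reg_r (g1^2)); [|lra]. rewrite HSe.
      assert (H' : (1 + h^2/(1+D) + g2^2) * (1+D) = (1 + g1^2 + g2^2) * D)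
        by (rewrite H; field; lra).
      field_simplify in H'; try lra.
    + assert (0 <= h^2/(1+D)) by (left; apply Rdiv_lt_0_compat; lra). lra.
    + apply Rdiv_lt_0_compat; [nra|lra].
Qed.
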